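(* For each $n\geq 2$ let $X_n$ be any set of $n$ distinct points in $\mathbb{R}^2$. Then $\lim_{n\to\infty}\rho(X_n)=1$, where $\rho(X)=P_X(M_X)/P_X(s^*_X)$.
   Context: For a finite $X=\{x_j:j\in J\}$, $P_X(s)=\sum_{j\in J}\|s-x_j\|^2+\max_{j\in J}\|s-x_j\|^2$, $s^*_X$ is its unique minimiser (the quadratic min-power centre), and $M_X=\frac{1}{|J|}\sum_jx_j$ is the centroid. *)

(* Defs.v *)
From Stdlib Require Import Reals List ClassicalEpsilon.
From Coquelicot Require Import Coquelicot.
Open Scope R_scope.

Definition pt : Type := (R * R)%type.

Definition sqdist (s x : pt) : R :=
  (fst s - fst x) ^ 2 + (snd s - snd x) ^ 2.

(* P_X(s) = sum_j ||s - x_j||^2 + max_j ||s - x_j||^2,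
   X given as a list of points (the max is taken over nonnegative values,
   starting from 0, which is harmless for nonempty X). *)
Definition PX (X : list pt) (s : pt) : R :=
  fold_right Rplus 0 (map (sqdist s) X) + fold_right Rmax 0 (map (sqdist s) X).

Definition centroid (X : list pt) : pt :=
  (fold_right Rplus 0 (map fst X) / INR (length X),
   fold_right Rplus 0 (map snd X) / INR (length X)).

Definition is_minimiser (X : list pt) (s : pt) : Prop :=
  forall t : pt, PX X s <= PX X t.

Definition smin (X : list pt) : pt :=
  epsilon (inhabits ((0, 0) : pt)) (is_minimiser X).

Definition rho (X : list pt) : R := PX X (centroid X) / PX X (smin X).

(* Main.v *)
Require Import Defs.
From Stdlib Require Import Reals List Lra Lia ClassicalEpsilon.
From Coquelicot Require Import Coquelicot.
Open Scope R_scope.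
Module MCpart.
From mathcomp Require Import all_boot all_order all_algebra.
From mathcomp Require Import boolp classical_sets reals topology normedtype derive.
From mathcomp Require Import Rstruct Rstruct_topology.
Import Order.TTheory GRing.Theory Num.Theory.

Section MC.
Local Open Scope ring_scope.
Local Open Scope classical_set_scope.

Lemma box_min (f : R * R -> R) (K : R) : 0 <= K -> continuous f ->
  exists c : R * R, (-K <= c.1 <= K) /\ (-K <= c.2 <= K) /\
   forall t : R * R, -K <= t.1 <= K -> -K <= t.2 <= K -> f c <= f t.
Proof.
move=> K0 cf.
have A0 : (`[-K, K] `*` `[-K, K] : set (R * R)) !=set0.
  by exists (0, 0); split; rewrite /= in_itv /= oppr_le0 K0.
have cA : compact (`[-K, K] `*` `[-K, K] : set (R * R)).
  by apply: compact_setX; apply: segment_compact.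
have [c cA' cmin] := compact_EVT_min A0 cA (continuous_subspaceT cf).
move: cA'; rewrite inE => -[/=]; rewrite !in_itv /= => c1 c2.
exists c; split => //; split => // t t1 t2; apply: cmin.
by rewrite inE; split; rewrite /= in_itv.
Qed.

Lemma cont_fst : continuous (fun t : R * R => t.1).
Proof. by move=> t; apply: cvg_fst. Qed.
Lemma cont_snd : continuous (fun t : R * R => t.2).
Proof. by move=> t; apply: cvg_snd. Qed.

Lemma cont_sqdist x : continuous (fun s : R * R => sqdist s x).
Proof.
move=> s.
have -> : (fun s : R * R => sqdist s x) =
  (fun s => (s.1 - x.1) * ((s.1 - x.1) * 1) + (s.2 - x.2) * ((s.2 - x.2) * 1)).
  by apply: funext => t.
have h1 : {for s, continuous (fun s : R * R => s.1 - x.1)}.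
  exact: (@cvgB _ R^o _ _ _ (fun s : R * R => s.1) (fun _ => x.1) _ _ (cont_fst s) (cvg_cst _)).
have h2 : {for s, continuous (fun s : R * R => s.2 - x.2)}.
  exact: (@cvgB _ R^o _ _ _ (fun s : R * R => s.2) (fun _ => x.2) _ _ (cont_snd s) (cvg_cst _)).
have h1' : {for s, continuous (fun s : R * R => (s.1 - x.1) * 1)}.
  exact: (@cvgM _ _ _ _ (fun s : R * R => _) (fun=> 1) _ _ h1 (cvg_cst _)).
have h2' : {for s, continuous (fun s : R * R => (s.2 - x.2) * 1)}.
  exact: (@cvgM _ _ _ _ (fun s : R * R => _) (fun=> 1) _ _ h2 (cvg_cst _)).
exact: (@cvgD _ R^o _ _ _ _ _ _ _ (cvgM h1 h1') (cvgM h2 h2')).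
Qed.

Lemma RmaxE (a b : R) : Rmax a b = Num.max a b.
Proof.
rewrite /Rmax; case: Rle_dec => h.
  case: (Rle_lt_or_eq_dec _ _ h) => h'.
    by apply/esym/max_idPr; apply/RleP.
  by rewrite h' maxxx.
by apply/esym/max_idPl; apply/RleP; apply: Rlt_le; apply: Rnot_le_lt.
Qed.

Lemma cont_sum (X : list pt) : continuous (fun s : R * R => fold_right Rplus 0%R (map (sqdist s) X)).
Proof.
elim: X => [|x l IH] s /=; first exact: cvg_cst.
exact: (@cvgD _ R^o _ _ _ _ _ _ _ (cont_sqdist x s) (IH s)).
Qed.

Lemma cont_max (X : list pt) : continuous (fun s : R * R => fold_right Rmax 0%R (map (sqdist s) X)).
Proof.
elim: X => [|x l IH] s /=; first exact: cvg_cst.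
have -> : (fun s : R * R => Rmax (sqdist s x) (fold_right Rmax 0%R (map (sqdist s) l))) =
   ((fun s => sqdist s x) \max (fun s => fold_right Rmax 0%R (map (sqdist s) l))).
  by apply: funext => t; rewrite RmaxE.
exact: (@continuous_max _ _ (fun s : R * R => sqdist s x : R^o) _ _ (cont_sqdist x s) (IH s)).
Qed.

Lemma cont_PX (X : list pt) : continuous (PX X).
Proof.
move=> s; rewrite /PX.
exact: (@cvgD _ R^o _ _ _ _ _ _ _ (cont_sum X s) (cont_max X s)).
Qed.
End MC.

Open Scope R_scope.

Definition Ssum (X : list pt) (s : pt) := fold_right Rplus 0 (List.map (sqdist s) X).
Definition Smax (X : list pt) (s : pt) := fold_right Rmax 0 (List.map (sqdist s) X).

Lemma sqdist_ge0 s x : 0 <= sqdist s x.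
Proof. unfold sqdist; pose proof (pow2_ge_0 (fst s - fst x)); pose proof (pow2_ge_0 (snd s - snd x)); lra. Qed.

Lemma Ssum_ge0 X s : 0 <= Ssum X s.
Proof.
unfold Ssum; induction X as [|x l IH]; simpl; [lra|].
pose proof (sqdist_ge0 s x); lra.
Qed.

Lemma Smax_ge0 X s : 0 <= Smax X s.
Proof.
unfold Smax; induction X as [|x l IH]; simpl; [lra|].
eapply Rle_trans; [exact IH|apply Rmax_r].
Qed.

Lemma Smax_ge X s x : In x X -> sqdist s x <= Smax X s.
Proof.
unfold Smax; induction X as [|y l IH]; simpl; [tauto|].
intros [<-|H]; [apply Rmax_l|].
eapply Rle_trans; [exact (IH H)|apply Rmax_r].
Qed.

Lemma PX_split X s : PX X s = Ssum X s + Smax X s.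
Proof. reflexivity. Qed.

Lemma PX_ge X s x : In x X -> sqdist s x <= PX X s.
Proof.
intro H; rewrite PX_split; pose proof (Smax_ge X s x H); pose proof (Ssum_ge0 X s); lra.
Qed.

Lemma Smax_le_PX X s : Smax X s <= PX X s.
Proof. rewrite PX_split; pose proof (Ssum_ge0 X s); lra. Qed.

Lemma abs_bnd a : - Rabs a <= a <= Rabs a.
Proof. split; [pose proof (Rle_abs (-a)) as H; rewrite Rabs_Ropp in H; lra | apply Rle_abs]. Qed.

Lemma far u a B : 0 <= B -> (Rabs a + B + 1 < u \/ u < -(Rabs a + B + 1)) -> B <= (u - a) ^ 2.
Proof.
intros HB H; pose proof (abs_bnd a); simpl.
destruct H as [H|H].
- assert (w : 1 <= u - a) by lra. assert (B <= u - a) by lra. nra.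
- assert (w : 1 <= a - u) by lra. assert (B <= a - u) by lra. nra.
Qed.

Lemma exists_min X : X <> nil -> exists s, is_minimiser X s.
Proof.
destruct X as [|x0 l]; [tauto|intros _].
set (B := PX (x0 :: l) x0).
set (K := Rabs (fst x0) + Rabs (snd x0) + B + 1).
assert (HB : 0 <= B) by (unfold B; rewrite PX_split; pose proof (Ssum_ge0 (x0::l) x0); pose proof (Smax_ge0 (x0::l) x0); lra).
assert (HK : 0 <= K) by (unfold K; pose proof (Rabs_pos (fst x0)); pose proof (Rabs_pos (snd x0)); lra).
destruct (box_min (PX (x0 :: l)) K (introT RleP HK) (cont_PX _)) as [c [Hc1 [Hc2 Hc]]].
exists c; intro t.
assert (Hin : In x0 (x0 :: l)) by (left; reflexivity).
assert (Hbox : forall u : pt, -K <= fst u <= K -> -K <= snd u <= K -> PX (x0::l) c <= PX (x0::l) u).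
{ intros u [u1 u2] [u3 u4]. apply/RleP. apply: Hc; apply/andP; split; apply/RleP; assumption. }
assert (HcB : PX (x0::l) c <= B).
{ apply Hbox; unfold K; destruct x0 as [a b]; simpl;
  pose proof (Rabs_pos a); pose proof (Rabs_pos b);
  pose proof (abs_bnd a); pose proof (abs_bnd b); lra. }
destruct (Rle_dec (-K) (fst t)) as [h1|h1]; [destruct (Rle_dec (fst t) K) as [h2|h2]|];
 [destruct (Rle_dec (-K) (snd t)) as [h3|h3]; [destruct (Rle_dec (snd t) K) as [h4|h4]|]|..];
 try (apply Hbox; lra);
 (eapply Rle_trans; [exact HcB|]; eapply Rle_trans; [|exact (PX_ge _ t x0 Hin)]);
 unfold sqdist, K in *; destruct x0 as [a b]; destruct t as [t1 t2]; simpl fst in *; simpl snd in *;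
 pose proof (Rabs_pos a); pose proof (Rabs_pos b);
 pose proof (pow2_ge_0 (t1 - a)); pose proof (pow2_ge_0 (t2 - b));
 repeat match goal with H : ~ _ <= _ |- _ => apply Rnot_le_lt in H end;
 first [ assert (B <= (t1 - a)^2) by (apply far; [lra| lra]); lra
       | assert (B <= (t2 - b)^2) by (apply far; [lra| lra]); lra ].
Qed.
End MCpart.
Import MCpart.
Open Scope R_scope.

Definition A1 (X : list pt) := fold_right Rplus 0 (map fst X).
Definition A2 (X : list pt) := fold_right Rplus 0 (map snd X).
Definition Qs (X : list pt) := fold_right Rplus 0 (map (fun x : pt => fst x ^ 2 + snd x ^ 2) X).

Lemma Ssum_formula X s : Ssum X s =
  INR (length X) * (fst s ^ 2 + snd s ^ 2) - 2 * (fst s * A1 X + snd s * A2 X) + Qs X.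
Proof.
unfold Ssum, A1, A2, Qs; induction X as [|x l IH]; cbn [map fold_right length].
- cbn [INR]; ring.
- rewrite IH. rewrite S_INR. unfold sqdist. ring.
Qed.

Lemma Ssum_centroid X s : (0 < length X)%nat ->
  Ssum X s = Ssum X (centroid X) + INR (length X) * sqdist s (centroid X).
Proof.
intro Hn. assert (Hn' : INR (length X) <> 0) by (apply not_0_INR; lia).
rewrite !Ssum_formula. unfold centroid, sqdist; simpl fst; simpl snd.
fold (A1 X) (A2 X). field. exact Hn'.
Qed.

Lemma pt_bound (lam : R) (c s x : pt) : 0 <= lam ->
  lam * sqdist c x <= (lam + 1) * sqdist s x + lam * (lam + 1) * sqdist c s.
Proof.
intro Hl; unfold sqdist.
destruct c as [c1 c2], s as [s1 s2], x as [x1 x2]; simpl.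
pose proof (pow2_ge_0 (lam * (c1 - s1) - (s1 - x1))).
pose proof (pow2_ge_0 (lam * (c2 - s2) - (s2 - x2))).
pose proof (pow2_ge_0 (c1 - s1)). pose proof (pow2_ge_0 (c2 - s2)).
pose proof (pow2_ge_0 (s1 - x1)). pose proof (pow2_ge_0 (s2 - x2)).
simpl in *. nra.
Qed.

Lemma max_bound (lam : R) (c s : pt) (L : list pt) : 0 <= lam ->
  lam * Smax L c <= (lam + 1) * Smax L s + lam * (lam + 1) * sqdist c s.
Proof.
intro Hl; unfold Smax; induction L as [|x l IH]; cbn [map fold_right].
- rewrite Rmult_0_r, Rmult_0_r, Rplus_0_l. pose proof (sqdist_ge0 c s).
  apply Rmult_le_pos; [apply Rmult_le_pos|]; lra.
- pose proof (pt_bound lam c s x Hl).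
  pose proof (Rmax_l (sqdist s x) (fold_right Rmax 0 (map (sqdist s) l))).
  pose proof (Rmax_r (sqdist s x) (fold_right Rmax 0 (map (sqdist s) l))).
  unfold Rmax at 1; destruct Rle_dec; nra.
Qed.

Lemma sqdist_sym a b : sqdist a b = sqdist b a.
Proof. unfold sqdist; ring. Qed.

Lemma key_ineq X s : (2 <= length X)%nat ->
  (INR (length X) - 1) * PX X (centroid X) <= INR (length X) * PX X s.
Proof.
intro Hn. set (n := INR (length X)).
assert (Hn2 : 2 <= n) by (unfold n; apply (le_INR 2); exact Hn).
pose proof (max_bound (n - 1) (centroid X) s X ltac:(lra)).
pose proof (Ssum_centroid X s ltac:(lia)).
pose proof (Ssum_ge0 X (centroid X)).
pose proof (sqdist_ge0 s (centroid X)).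
rewrite (sqdist_sym (centroid X) s) in H.
rewrite !PX_split. fold n in H0.
replace (n - 1 + 1) with n in H by ring.
nra.
Qed.

Lemma sq0 r : r ^ 2 = 0 -> r = 0.
Proof. intro h; apply Rsqr_0_uniq; unfold Rsqr; simpl in h; rewrite Rmult_1_r in h; exact h. Qed.

Lemma PX_pos X s x y : In x X -> In y X -> x <> y -> 0 < PX X s.
Proof.
intros Hx Hy Hxy.
pose proof (PX_ge X s x Hx). pose proof (PX_ge X s y Hy).
destruct (Rlt_or_le 0 (PX X s)) as [h|h]; [exact h|].
exfalso; apply Hxy.
unfold sqdist in *. destruct s as [s1 s2], x as [x1 x2], y as [y1 y2]; simpl in *.
pose proof (pow2_ge_0 (s1 - x1)). pose proof (pow2_ge_0 (s2 - x2)).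
pose proof (pow2_ge_0 (s1 - y1)). pose proof (pow2_ge_0 (s2 - y2)).
assert (e1 : (s1 - x1) ^ 2 = 0) by lra. assert (e2 : (s2 - x2) ^ 2 = 0) by lra.
assert (e3 : (s1 - y1) ^ 2 = 0) by lra. assert (e4 : (s2 - y2) ^ 2 = 0) by lra.
apply sq0 in e1, e2, e3, e4.
f_equal; lra.
Qed.

Lemma rho_bounds X : (2 <= length X)%nat -> NoDup X ->
  1 <= rho X <= 1 + 2 / INR (length X).
Proof.
intros Hn Hnd.
destruct X as [|x [|y l]]; simpl in Hn; try lia.
set (X := x :: y :: l) in *.
assert (Hxy : x <> y) by (intro e; subst y; inversion Hnd; apply H1; left; reflexivity).
assert (Hmin : is_minimiser X (smin X)).
{ unfold smin; apply epsilon_spec; apply exists_min; discriminate. }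
set (s := smin X) in *.
assert (Hp : 0 < PX X s) by (apply (PX_pos X s x y); [left|right;left|]; auto).
pose proof (Hmin (centroid X)) as Hle.
pose proof (key_ineq X s Hn) as Hk.
set (n := INR (length X)) in *.
assert (Hn2 : 2 <= n) by (unfold n; apply (le_INR 2); exact Hn).
unfold rho; fold s.
split.
- apply (Rmult_le_reg_r (PX X s)); [exact Hp|].
  unfold Rdiv; rewrite Rmult_assoc, Rinv_l by lra. lra.
- apply (Rmult_le_reg_r (PX X s)); [exact Hp|].
  unfold Rdiv; rewrite Rmult_assoc, Rinv_l by lra.
  apply (Rmult_le_reg_l n); [lra|].
  assert (e : n * ((1 + 2 * / n) * PX X s) = (n + 2) * PX X s) by (field; lra).
  rewrite e. nra.
Qed.

Theorem corollary3 (X : nat -> list pt) :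
  (forall n : nat, (2 <= n)%nat -> length (X n) = n /\ NoDup (X n)) ->
  is_lim_seq (fun n : nat => rho (X n)) 1.
Proof.
intro HX.
apply (is_lim_seq_le_le_loc (fun _ => 1) _ (fun n => 1 + 2 * / INR n)).
- exists 2%nat; intros n Hn. destruct (HX n Hn) as [Hl Hnd].
  pose proof (rho_bounds (X n) ltac:(lia) Hnd) as Hb. rewrite Hl in Hb. exact Hb.
- apply is_lim_seq_const.
- replace (Finite 1) with (Finite (1 + 2 * 0)) by (f_equal; ring).
  apply is_lim_seq_plus'.
  + apply is_lim_seq_const.
  + replace (Finite (2 * 0)) with (Rbar_mult 2 0) by reflexivity.
    apply (is_lim_seq_scal_l (fun n => / INR n) 2 0).
    replace (Finite 0) with (Rbar_inv p_infty) by reflexivity.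
    apply is_lim_seq_inv; [apply is_lim_seq_INR | discriminate].
Qed.
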